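(* Let $0<p<1$ and let $(\mathcal M,d,0)$ be a pointed $p$-metric space with $|\mathcal M|\ge3$. The following are equivalent: (a) for every $a\in[0,\infty)^{\mathcal M}$ with $\sum_{x\in\mathcal M}(a_xd(x,0))^p<\infty$ we have $\|\sum_{x\in\mathcal M}a_x\delta(x)\|_{\mathcal F_p(\mathcal M)}^p=\sum_{x\in\mathcal M}(a_xd(x,0))^p$; (b) for every $\alpha\ge0$ and every two distinct $x,y\in\mathcal M\setminus\{0\}$ we have $\|\delta(x)+\alpha\delta(y)\|_{\mathcal F_p(\mathcal M)}^p=d^p(x,0)+\alpha^pd^p(y,0)$; (c) for every $x\in\mathcal M\setminus\{0\}$ we have $d(x,0)=d(x,\mathcal M\setminus\{x\})$.
   Context: A $p$-metric space is a set with $d$ such that $d^p$ is a metric; pointed means a distinguished point $0$. A $p$-Banach space is a complete vector space with a $p$-norm (norm axioms with $\|x+y\|^p\le\|x\|^p+\|y\|^p$). $\delta(x)$ is the evaluation functional at $x$ on real functions on $\mathcal M$ vanishing at $0$ (so $\delta(0)=0$); $\mathcal F_p(\mathcal M)$ is the completion of $\mathrm{span}\{\delta(x)\}$ under $\|\sum a_i\delta(x_i)\|=\sup\|\sum a_if(x_i)\|_Y$ over all $p$-Banach $Y$ and $1$-Lipschitz $f:\mathcal M\to Y$ with $f(0)=0$. In (a), the possibly infinite sum $\sum_x a_x\delta(x)$ is the limit in $\mathcal F_p(\mathcal M)$ of finite partial sums (net indexed by finite subsets of $\mathcal M$). *)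

(* Defs.v *)
From HB Require Import structures.
From mathcomp Require Import all_boot all_order all_algebra finmap.
From mathcomp Require Import all_classical all_reals all_analysis.
Set Implicit Arguments. Unset Strict Implicit. Unset Printing Implicit Defensive.
Import Order.TTheory GRing.Theory Num.Theory.
Local Open Scope classical_set_scope.
Local Open Scope ring_scope.

Definition is_pmetric (R : realType) (p : R) (M : Type) (d : M -> M -> R) :=
  [/\ forall x y, 0 <= d x y,
      forall x y, d x y = 0 <-> x = y,
      forall x y, d x y = d y x &
      forall x y z, d x z `^ p <= d x y `^ p + d y z `^ p].

Record pBanach (R : realType) (q : R) := PBanach {
  pb_type : lmodType R;
  pb_norm : pb_type -> R;
  pb_norm_ge0 : forall x, 0 <= pb_norm x;
  pb_norm_eq0 : forall x, pb_norm x = 0 -> x = 0;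
  pb_normZ : forall (a : R) x, pb_norm (a *: x) = `|a| * pb_norm x;
  pb_normD : forall x y, pb_norm (x + y) `^ q <= pb_norm x `^ q + pb_norm y `^ q;
  pb_complete : forall u : nat -> pb_type,
    (forall e, 0 < e -> exists N, forall n m, (N <= n)%N -> (N <= m)%N ->
        pb_norm (u n - u m) < e) ->
    exists l, forall e, 0 < e -> exists N, forall n, (N <= n)%N -> pb_norm (u n - l) < e
}.
Arguments pb_norm {R q} _ _.

(* The norm in F_p(M) of the finite combination  sum_{(c,x) in s} c delta(x):
   supremum of ||sum c f(x)||_Y over all p-Banach Y and all 1-Lipschitz
   f : M -> Y with f(0) = 0. *)
Definition Fp_norm (R : realType) (p : R) (M : Type) (d : M -> M -> R) (o : M)
    (s : seq (R * M)) : R :=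
  sup [set r | exists (Y : @pBanach R p) (f : M -> pb_type Y),
         [/\ f o = 0,
             forall x y, pb_norm Y (f x - f y) <= d x y &
             r = pb_norm Y (\sum_(c <- s) c.1 *: f c.2)]].

Definition finset_net_cvg (R : realType) (M : Type) (g : set M -> R) (l : R) :=
  forall e, 0 < e -> exists A : set M, finite_set A /\
    forall B : set M, finite_set B -> A `<=` B -> `|g B - l| < e.

Definition dist_set (R : realType) (M : Type) (d : M -> M -> R) (x : M) (A : set M) : R :=
  inf [set d x z | z in A].

(* Main.v *)
Require Import Defs.
From HB Require Import structures.
From mathcomp Require Import all_boot all_order all_algebra finmap.
From mathcomp Require Import all_classical all_reals all_analysis.
From mathcomp Require Import lra.
Set Implicit Arguments. Unset Strict Implicit. Unset Printing Implicit Defensive.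
Import Order.TTheory GRing.Theory Num.Theory.
Local Open Scope classical_set_scope.
Local Open Scope ring_scope.

Lemma fin_eventually n (Q : 'I_n -> nat -> Prop) :
  (forall i, exists N, forall m, (N <= m)%N -> Q i m) ->
  exists N, forall m, (N <= m)%N -> forall i, Q i m.
Proof.
move=> h; have [f hf] := fin_all_exists h.
exists (\max_i f i) => m hm i; apply: hf; apply: leq_trans hm.
exact: leq_bigmax.
Qed.

Section RC.
Import numFieldNormedType.Exports.
Lemma real_cauchy (R : realType) (c : nat -> R) :
  (forall e, 0 < e -> exists N, forall n m, (N <= n)%N -> (N <= m)%N -> `|c n - c m| < e) ->
  exists l, forall e, 0 < e -> exists N, forall n, (N <= n)%N -> `|c n - l| < e.
Proof.
move=> Hc.
have hce : cauchy_ex (c @ \oo).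
  move=> e e0; have [N HN] := Hc e e0; exists (c N).
  exists N => // n /= hn. rewrite /ball /=. exact: HN.
have hcv : cvg (c @ \oo) by apply/cauchy_cvgP; exact: (cauchy_exP (c @ \oo) hce).
exists (lim (c @ \oo)) => e e0.
have := (proj1 (cvgrPdist_lt _ _) hcv) e e0.
case=> N _ HN; exists N => n hn; rewrite distrC; exact: HN.
Qed.
End RC.

Section Space.
Variables (R : realType) (p : R) (hp0 : 0 < p) (hp1 : p <= 1).

Lemma powRp_le1 a : 0 <= a <= 1 -> a <= a `^ p.
Proof.
case/andP=> a0 a1; have [->|an0] := eqVneq a 0; first by rewrite powR_ge0.
by apply: ger1_powR => //; rewrite a1 andbT lt_neqAle eq_sym an0 a0.
Qed.

Lemma powRDle s t : 0 <= s -> 0 <= t -> (s + t) `^ p <= s `^ p + t `^ p.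
Proof.
move=> s0 t0; have [st0|st0] := eqVneq (s + t) 0.
  by rewrite st0 powR0 ?gt_eqF // addr_ge0 // powR_ge0.
have u0 : 0 < s + t by rewrite lt_neqAle eq_sym st0 addr_ge0.
have es : s `^ p = (s + t) `^ p * (s / (s + t)) `^ p.
  by rewrite -powRM ?divr_ge0 ?(ltW u0) // mulrCA divff // mulr1.
have et : t `^ p = (s + t) `^ p * (t / (s + t)) `^ p.
  by rewrite -powRM ?divr_ge0 ?(ltW u0) // mulrCA divff // mulr1.
rewrite es et -mulrDr.
rewrite -[X in X <= _]mulr1 ler_wpM2l ?powR_ge0 //.
apply: (@le_trans _ _ (s / (s + t) + t / (s + t))).
  by rewrite -mulrDl divff.
apply: lerD; apply: powRp_le1; rewrite divr_ge0 ?(ltW u0) //=;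
  rewrite ler_pdivrMr // mul1r; [rewrite lerDl | rewrite lerDr] => //.
Qed.

Lemma max0D (x y : R) : Num.max (x + y) 0 <= Num.max x 0 + Num.max y 0.
Proof.
rewrite ge_max; apply/andP; split.
  by apply: lerD; rewrite le_max lexx.
by apply: addr_ge0; rewrite le_max lexx orbT.
Qed.

Variables (n : nat) (D : 'I_n -> R) (hD : forall i, 0 < D i).

Definition Pp (w : 'rV[R]_n) := \sum_(i < n) D i `^ p * (Num.max (w 0 i) 0) `^ p.
Definition Phi w := Num.max (Pp w) (Pp (- w)).
Definition Nrm w := Phi w `^ p^-1.

Lemma Pp_ge0 w : 0 <= Pp w.
Proof. by apply: sumr_ge0 => i _; rewrite mulr_ge0 ?powR_ge0. Qed.

Lemma Phi_ge0 w : 0 <= Phi w.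
Proof. by rewrite le_max Pp_ge0. Qed.

Lemma PpD u v : Pp (u + v) <= Pp u + Pp v.
Proof.
rewrite /Pp -big_split /=; apply: ler_sum => i _.
rewrite -mulrDr ler_wpM2l ?powR_ge0 // mxE.
apply: le_trans (powRDle _ _); last 2 first.
- by rewrite le_max lexx orbT.
- by rewrite le_max lexx orbT.
apply: ge0_ler_powR; rewrite ?nnegrE ?(ltW hp0) ?max0D //.
  by rewrite le_max lexx orbT.
by rewrite addr_ge0 // le_max lexx orbT.
Qed.

Lemma PhiD u v : Phi (u + v) <= Phi u + Phi v.
Proof.
rewrite /Phi ge_max; apply/andP; split.
  by apply: le_trans (PpD u v) _; apply: lerD; rewrite le_max lexx.
rewrite opprD; apply: le_trans (PpD (- u) (- v)) _.
by apply: lerD; rewrite le_max lexx orbT.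
Qed.

Lemma PpZ a w : 0 <= a -> Pp (a *: w) = a `^ p * Pp w.
Proof.
move=> a0; rewrite /Pp mulr_sumr; apply: eq_bigr => i _.
rewrite mxE mulrCA -(@powRM _ a) // ?le_max ?lexx ?orbT //.
by rewrite maxr_pMr // mulr0.
Qed.

Lemma PhiN w : Phi (- w) = Phi w.
Proof. by rewrite /Phi opprK maxC. Qed.

Lemma PhiZ a w : Phi (a *: w) = `|a| `^ p * Phi w.
Proof.
have H b : 0 <= b -> Phi (b *: w) = b `^ p * Phi w.
  move=> b0; rewrite /Phi -scalerN !PpZ //.
  by rewrite maxr_pMr ?powR_ge0.
have [a0|a0] := leP 0 a; first by rewrite ger0_norm // H.
by rewrite -[a]opprK scaleNr PhiN H ?oppr_ge0 ?ltW // ltr0_norm // opprK.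
Qed.

Lemma NrmE w : Nrm w `^ p = Phi w.
Proof.
rewrite /Nrm -powRrM.
have -> : p^-1 * p = 1 by rewrite mulVf // gt_eqF.
by rewrite powRr1 // Phi_ge0.
Qed.

Lemma Nrm_ge0 w : 0 <= Nrm w.
Proof. exact: powR_ge0. Qed.

Lemma NrmZ a w : Nrm (a *: w) = `|a| * Nrm w.
Proof.
rewrite /Nrm PhiZ powRM; [|exact: powR_ge0|exact: Phi_ge0].
rewrite -powRrM.
have -> : p * p^-1 = 1 by rewrite mulfV // gt_eqF.
by rewrite (powRr1 (normr_ge0 a)).
Qed.

Lemma NrmD u v : Nrm (u + v) `^ p <= Nrm u `^ p + Nrm v `^ p.
Proof. have := PhiD u v. by rewrite -(NrmE (u + v)) -(NrmE u) -(NrmE v). Qed.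

Lemma le_powRinv x y : 0 <= x -> 0 <= y -> x `^ p <= y -> x <= y `^ p^-1.
Proof.
move=> x0 y0 h.
have -> : x = (x `^ p) `^ p^-1.
  rewrite -powRrM.
  have -> : p * p^-1 = 1 by rewrite mulfV // gt_eqF.
  by rewrite (powRr1 x0).
apply: ge0_ler_powR => //.
- by rewrite invr_ge0 ltW.
- by rewrite nnegrE powR_ge0.
Qed.

Lemma Pp_eq0 w : Pp w = 0 -> forall i, w 0 i <= 0.
Proof.
move=> h i.
have hi := (psumr_eq0P (fun j _ => mulr_ge0 (powR_ge0 _ _) (powR_ge0 _ _)) h) i isT.
have /orP[] : (D i `^ p == 0) || ((Num.max (w 0 i) 0) `^ p == 0).
  by rewrite -mulf_eq0 hi.
  by rewrite gt_eqF // powR_gt0.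
move=> /eqP /powR_eq0_eq0 hm.
by rewrite -hm le_max lexx.
Qed.
Arguments Pp_eq0 : clear implicits.

Lemma Nrm_eq0 w : Nrm w = 0 -> w = 0.
Proof.
move=> /powR_eq0_eq0 h0.
have h1 : Pp w = 0.
  apply: le_anti; rewrite Pp_ge0 andbT -h0 /Phi le_max lexx //.
have h2 : Pp (- w) = 0.
  apply: le_anti; rewrite Pp_ge0 andbT -h0 /Phi le_max lexx orbT //.
apply/matrixP => i j; rewrite (ord1 i) [RHS]mxE.
apply: le_anti; rewrite (Pp_eq0 _ h1 j) /=.
have := Pp_eq0 _ h2 j; rewrite mxE.
by rewrite oppr_le0.
Qed.


Lemma coord_le (w : 'rV[R]_n) i : (D i * `|w 0 i|) `^ p <= Phi w.
Proof.
have H (v : 'rV[R]_n) : D i `^ p * (Num.max (v 0 i) 0) `^ p <= Pp v.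
  rewrite /Pp (bigD1 i) //= lerDl.
  by apply: sumr_ge0 => j _; rewrite mulr_ge0 // powR_ge0.
rewrite powRM; [|exact: ltW|exact: normr_ge0].
have [h|h] := leP 0 (w 0 i).
  rewrite ger0_norm //.
  rewrite -[X in _ * X `^ _ <= _](@max_l _ _ (w 0 i) 0) //.
  apply: le_trans (H w) _.
  by rewrite /Phi le_max lexx.
rewrite ltr0_norm //.
have e : - w 0 i = (- w) 0 i by rewrite mxE.
rewrite e -[X in _ * X `^ _ <= _](@max_l _ _ ((- w) 0 i) 0); last first.
  by rewrite -e oppr_ge0 ltW.
apply: le_trans (H (- w)) _.
by rewrite /Phi le_max lexx orbT.
Qed.

Lemma coord_le_Nrm (w : 'rV[R]_n) i : D i * `|w 0 i| <= Nrm w.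
Proof.
apply: le_powRinv; [by rewrite mulr_ge0 // ltW | exact: Phi_ge0 | exact: coord_le].
Qed.

Lemma Phi_le (w : 'rV[R]_n) : Phi w <= \sum_(i < n) D i `^ p * `|w 0 i| `^ p.
Proof.
have H (v : 'rV[R]_n) : Pp v <= \sum_(i < n) D i `^ p * `|v 0 i| `^ p.
  apply: ler_sum => i _; apply: ler_wpM2l; first exact: powR_ge0.
  apply: ge0_ler_powR; first exact: ltW.
  - by rewrite nnegrE le_max lexx orbT.
  - by rewrite nnegrE normr_ge0.
  by rewrite ge_max normr_ge0 ler_norm.
rewrite /Phi ge_max H /=.
apply: le_trans (H (- w)) _; apply: ler_sum => i _.
by rewrite mxE normrN.
Qed.


Lemma Nrm_complete (u : nat -> 'rV[R]_n) :
  (forall e, 0 < e -> exists N, forall k m, (N <= k)%N -> (N <= m)%N -> Nrm (u k - u m) < e) ->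
  exists l, forall e, 0 < e -> exists N, forall k, (N <= k)%N -> Nrm (u k - l) < e.
Proof.
move=> hu.
have hc i : exists L, forall e, 0 < e -> exists N, forall k, (N <= k)%N -> `|u k 0 i - L| < e.
  apply: real_cauchy => e e0.
  have [N HN] := hu (D i * e) (mulr_gt0 (hD i) e0).
  exists N => k m hk hm.
  have := le_lt_trans (coord_le_Nrm (u k - u m) i) (HN k m hk hm).
  rewrite ltr_pM2l; last exact: hD. by rewrite !mxE.
have [L HL] := fin_all_exists hc.
exists (\row_i L i) => e e0.
set C := \sum_(i < n) D i `^ p.
have C0 : 0 <= C by apply: sumr_ge0 => i _; exact: powR_ge0.
set K := C `^ p^-1.
have K0 : 0 <= K := powR_ge0 _ _.
have K1 : 0 < K + 1 by rewrite ltr_wpDl // ltr01.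
set dl := e / (K + 1).
have dl0 : 0 < dl by rewrite divr_gt0.
have [N HN] := @fin_eventually n (fun i k => `|u k 0 i - L i| < dl) (fun i => HL i dl dl0).
exists N => k hk.
have h1 : Phi (u k - \row_i L i) <= C * dl `^ p.
  apply: le_trans (Phi_le _) _.
  rewrite /C mulr_suml; apply: ler_sum => i _.
  apply: ler_wpM2l; first exact: powR_ge0.
  apply: ge0_ler_powR; first exact: ltW.
  - by rewrite nnegrE normr_ge0.
  - by rewrite nnegrE ltW.
  by rewrite !mxE; apply: ltW; apply: HN.
have h2 : Nrm (u k - \row_i L i) <= K * dl.
  have pi0 : 0 <= p^-1 by rewrite invr_ge0 ltW.
  have := ge0_ler_powR pi0 (Phi_ge0 _) _ h1.
  rewrite /Nrm => h; apply: le_trans (h _) _.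
    by rewrite nnegrE mulr_ge0 // powR_ge0.
  rewrite powRM; [|exact: C0|exact: powR_ge0].
  rewrite -/K -powRrM.
  have -> : p * p^-1 = 1 by rewrite mulfV // gt_eqF.
  by rewrite (powRr1 (ltW dl0)).
apply: le_lt_trans h2 _.
rewrite /dl mulrA ltr_pdivrMr //.
by rewrite mulrDr mulr1 mulrC ltrDl.
Qed.

End Space.

Lemma sum_pred1 (I : eqType) (V : nmodType) (r : seq I) x (v : V) :
  uniq r -> x \in r -> \sum_(z <- r) (if z == x then v else 0) = v.
Proof.
move=> ur xr; rewrite (bigD1_seq x) //= eqxx big1 ?addr0 //.
by move=> z /negbTE ->.
Qed.

Section Fp.
Variables (R : realType) (p : R) (hp0 : 0 < p) (hp1 : p < 1).
Variables (M : choiceType) (d : M -> M -> R) (o : M) (hd : is_pmetric p d).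

Lemma d_ge0 x y : 0 <= d x y. Proof. by case: hd. Qed.
Lemma d_eq0 x y : d x y = 0 <-> x = y. Proof. by case: hd. Qed.
Lemma d_sym x y : d x y = d y x. Proof. by case: hd. Qed.
Lemma d_xx x : d x x = 0. Proof. exact/d_eq0. Qed.

Lemma pb_norm0 (Y : @pBanach R p) : pb_norm Y 0 = 0.
Proof. by have := @pb_normZ _ _ Y 0 0; rewrite scale0r normr0 mul0r. Qed.

Definition Lip (Y : @pBanach R p) (f : M -> pb_type Y) :=
  f o = 0 /\ forall x y, pb_norm Y (f x - f y) <= d x y.

Lemma upper (Y : @pBanach R p) (f : M -> pb_type Y) : Lip f ->
  forall s : seq (R * M),
  pb_norm Y (\sum_(c <- s) c.1 *: f c.2) `^ p <= \sum_(c <- s) (`|c.1| * d c.2 o) `^ p.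
Proof.
case=> fo fL; elim=> [|c s IH].
  by rewrite !big_nil pb_norm0 powR0 // gt_eqF.
rewrite !big_cons; apply: le_trans (pb_normD _ _) _; apply: lerD => //.
rewrite pb_normZ powRM; [|exact: normr_ge0|exact: pb_norm_ge0].
rewrite powRM; [|exact: normr_ge0|exact: d_ge0].
apply: ler_wpM2l; first exact: powR_ge0.
apply: ge0_ler_powR; first exact: ltW.
- by rewrite nnegrE pb_norm_ge0.
- by rewrite nnegrE d_ge0.
by have := fL c.2 o; rewrite fo subr0.
Qed.

Definition FpS (s : seq (R * M)) := [set r | exists (Y : @pBanach R p) (f : M -> pb_type Y),
         [/\ f o = 0, forall x y, pb_norm Y (f x - f y) <= d x y &
             r = pb_norm Y (\sum_(c <- s) c.1 *: f c.2)]].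

Lemma FpE s : Fp_norm p d o s = sup (FpS s). Proof. by []. Qed.

Definition Ub (s : seq (R * M)) := (\sum_(c <- s) (`|c.1| * d c.2 o) `^ p) `^ p^-1.

Lemma Ub_ge0 s : 0 <= Ub s. Proof. exact: powR_ge0. Qed.

Lemma le_powRinv' x y : 0 <= x -> 0 <= y -> x `^ p <= y -> x <= y `^ p^-1.
Proof.
move=> x0 y0 h.
have -> : x = (x `^ p) `^ p^-1.
  rewrite -powRrM.
  have -> : p * p^-1 = 1 by rewrite mulfV // gt_eqF.
  by rewrite (powRr1 x0).
apply: ge0_ler_powR => //.
- by rewrite invr_ge0 ltW.
- by rewrite nnegrE powR_ge0.
Qed.

Lemma FpS_ub s : ubound (FpS s) (Ub s).
Proof.
move=> r [Y [f [h1 h2 ->]]].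
apply: le_powRinv'; first exact: pb_norm_ge0.
  by apply: sumr_ge0 => c _; exact: powR_ge0.
exact: (upper (conj h1 h2)).
Qed.

Lemma sup_le_U (S : set R) U : 0 <= U -> ubound S U -> sup S <= U.
Proof.
move=> U0 hU; have [ne|e] := pselect (S !=set0); first exact: ge_sup.
have -> : S = set0.
  by apply/seteqP; split => // r hr; exfalso; apply: e; exists r.
by rewrite sup0.
Qed.

Lemma Fp_le_Ub s : Fp_norm p d o s <= Ub s.
Proof. rewrite FpE; apply: sup_le_U; [exact: Ub_ge0 | exact: FpS_ub]. Qed.

Lemma Fp_le s U : 0 <= U ->
  (forall (Y : @pBanach R p) (f : M -> pb_type Y), Lip f ->
     pb_norm Y (\sum_(c <- s) c.1 *: f c.2) <= U) -> Fp_norm p d o s <= U.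
Proof.
move=> U0 h; apply: sup_le_U => // r [Y [f [h1 h2 ->]]]; exact: h.
Qed.

Lemma Fp_ge s (Y : @pBanach R p) (f : M -> pb_type Y) : Lip f ->
  pb_norm Y (\sum_(c <- s) c.1 *: f c.2) <= Fp_norm p d o s.
Proof.
case=> h1 h2; apply: sup_upper_bound.
  split; last by exists (Ub s); exact: FpS_ub.
  by exists (pb_norm Y (\sum_(c <- s) c.1 *: f c.2)); exists Y, f.
by exists Y, f.
Qed.

Lemma Fp_eq s1 s2 :
  (forall (V : lmodType R) (f : M -> V),
     \sum_(c <- s1) c.1 *: f c.2 = \sum_(c <- s2) c.1 *: f c.2) ->
  Fp_norm p d o s1 = Fp_norm p d o s2.
Proof.
move=> h; rewrite !FpE; congr sup; apply/seteqP; split => r [Y [f [h1 h2 ->]]];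
  exists Y, f; split => //; by rewrite h.
Qed.

End Fp.

Section Lower.
Variables (R : realType) (p : R) (hp0 : 0 < p) (hp1 : p < 1).
Variables (M : choiceType) (d : M -> M -> R) (o : M) (hd : is_pmetric p d).
Hypothesis hc : forall x z, x != o -> z != x -> d x o <= d x z.

Lemma powRK x : 0 <= x -> (x `^ p) `^ p^-1 = x.
Proof.
move=> x0; rewrite -powRrM.
have -> : p * p^-1 = 1 by rewrite mulfV // gt_eqF.
by rewrite (powRr1 x0).
Qed.

Lemma powRK' x : 0 <= x -> (x `^ p^-1) `^ p = x.
Proof.
move=> x0; rewrite -powRrM.
have -> : p^-1 * p = 1 by rewrite mulVf // gt_eqF.
by rewrite (powRr1 x0).
Qed.

Lemma sum_nth (r : seq M) (G : M -> R) :
  \sum_(i < size r) G (nth o r i) = \sum_(z <- r) G z.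
Proof. by rewrite (big_nth o) big_mkord. Qed.

Variables (s : seq M) (a : M -> R) (us : uniq s) (a0 : forall x, 0 <= a x).

Let s' := [seq x <- s | x != o].
Let n := size s'.
Let D : 'I_n -> R := fun i => d (nth o s' i) o.

Lemma ins (i : 'I_n) : nth o s' i \in s'.
Proof. apply: mem_nth. exact: (ltn_ord i). Qed.

Lemma neo (i : 'I_n) : nth o s' i != o.
Proof. by have := ins i; rewrite mem_filter => /andP[]. Qed.

Lemma hD (i : 'I_n) : 0 < D i.
Proof.
rewrite lt_neqAle (d_ge0 hd) andbT eq_sym; apply/negP => /eqP /(d_eq0 hd).
by apply/eqP; exact: neo.
Qed.

Definition Yl := @PBanach R p 'rV[R]_n (Nrm p D) (Nrm_ge0 p D)
  (fun w => @Nrm_eq0 _ _ _ _ hD w) (NrmZ hp0 D) (NrmD hp0 (ltW hp1) D)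
  (fun u => @Nrm_complete _ _ hp0 _ _ hD u).

Definition fl (z : M) : 'rV[R]_n := \row_(i < n) (if nth o s' i == z then 1 else 0).

Lemma fl_o : fl o = 0.
Proof.
apply/matrixP => i j; rewrite !mxE.
by rewrite (negbTE (neo j)).
Qed.


Lemma Pp_fl x y : Pp p D (fl x - fl y) <= d x y `^ p.
Proof.
have [<-|nxy] := eqVneq x y.
  rewrite subrr /Pp big1 ?powR_ge0 // => i _.
  by rewrite mxE /= maxxx powR0 ?gt_eqF // mulr0.
apply: (@le_trans _ _ (\sum_(i < n) (if nth o s' i == x then d x y `^ p else 0))).
  apply: ler_sum => i _; rewrite !mxE.
  have [hx|hx] := eqVneq (nth o s' i) x.
    have hy : nth o s' i == y = false by rewrite hx (negbTE nxy).
    rewrite hy subr0 max_l ?ler01 // powR1 mulr1.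
    apply: ge0_ler_powR; first exact: ltW.
    - by rewrite nnegrE (d_ge0 hd).
    - by rewrite nnegrE (d_ge0 hd).
    rewrite /D hx; apply: hc; [by rewrite -hx neo | by rewrite eq_sym].
  rewrite max_r; first by rewrite powR0 ?gt_eqF // mulr0.
  by rewrite sub0r oppr_le0; case: ifP => _; [exact: ler01 | exact: lexx].
rewrite -(big_mkord xpredT (fun i => if nth o s' i == x then d x y `^ p else 0)).
rewrite -(big_nth o xpredT (fun z => if z == x then d x y `^ p else 0)).
have [xs|xs] := boolP (x \in s').
  rewrite sum_pred1 //; exact: filter_uniq.
rewrite big1_seq; first exact: powR_ge0.
move=> z /andP[_ zs]; case: eqP => // ezx.
by move: xs; rewrite -ezx zs.
Qed.

Lemma fl_lip x y : Nrm p D (fl x - fl y) <= d x y.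
Proof.
rewrite /Nrm -(powRK (d_ge0 hd x y)).
apply: ge0_ler_powR.
- by rewrite invr_ge0 ltW.
- by rewrite nnegrE Phi_ge0.
- by rewrite nnegrE powR_ge0.
rewrite /Phi ge_max Pp_fl /= opprB (d_sym hd) Pp_fl //.
Qed.

Lemma fl_sum : Nrm p D (\sum_(c <- [seq (a x, x) | x <- s]) c.1 *: fl c.2)
   = Ub p d o [seq (a x, x) | x <- s].
Proof.
rewrite big_map /=.
set w := \sum_(x <- s) a x *: fl x.
have hw i : w 0 i = a (nth o s' i).
  rewrite /w summxE.
  rewrite (eq_bigr (fun x => if x == nth o s' i then a (nth o s' i) else 0)).
    rewrite sum_pred1 //.
    by have := ins i; rewrite mem_filter => /andP[].
  move=> x _; rewrite !mxE eq_sym; case: eqP => [->|_]; first by rewrite mulr1.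
  by rewrite mulr0.
have hP1 : Pp p D w = \sum_(x <- s) (a x * d x o) `^ p.
  rewrite /Pp.
  rewrite (eq_bigr (fun i : 'I_n => (fun z => (a z * d z o) `^ p) (nth o s' i))); last first.
    by move=> i _; rewrite hw max_l // powRM // ?(d_ge0 hd) // mulrC.
  apply: eq_trans (sum_nth s' (fun z => (a z * d z o) `^ p)) _.
  rewrite big_filter big_mkcond /=; apply: eq_bigr => z _.
  case: eqP => // ->; by rewrite (d_xx hd) mulr0 powR0 // gt_eqF.
have hP2 : Pp p D (- w) = 0.
  rewrite /Pp big1 // => i _; rewrite mxE hw max_r ?oppr_le0 //.
  by rewrite powR0 ?gt_eqF // mulr0.
rewrite /Nrm /Phi hP1 hP2 max_l; last by apply: sumr_ge0 => *; exact: powR_ge0.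
rewrite /Ub big_map; congr (_ `^ _); apply: eq_bigr => x _ /=.
by rewrite ger0_norm.
Qed.

Lemma lower : Fp_norm p d o [seq (a x, x) | x <- s] = Ub p d o [seq (a x, x) | x <- s].
Proof.
apply/le_anti; apply/andP; split; first exact: Fp_le_Ub.
rewrite -fl_sum.
have L : Lip d o (fl : M -> pb_type Yl).
  split; [exact: fl_o | exact: fl_lip].
have := (Fp_ge hp0 hd [seq (a x, x) | x <- s] L). move=> h; exact h. Qed.

End Lower.

Section Main.
Variables (R : realType) (p : R) (hp0 : 0 < p) (hp1 : p < 1).
Variables (M : choiceType) (d : M -> M -> R) (o : M) (hd : is_pmetric p d).

Lemma Ub_map (s : seq M) a : (forall x, 0 <= a x) ->
  Ub p d o [seq (a x, x) | x <- s] = (\sum_(x <- s) (a x * d x o) `^ p) `^ p^-1.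
Proof.
move=> a0; rewrite /Ub big_map; congr (_ `^ _); apply: eq_bigr => x _ /=.
by rewrite ger0_norm.
Qed.

Lemma Fp_pow (hc : forall x z, x != o -> z != x -> d x o <= d x z) (s : seq M) a :
  uniq s -> (forall x, 0 <= a x) ->
  Fp_norm p d o [seq (a x, x) | x <- s] `^ p = \sum_(x <- s) (a x * d x o) `^ p.
Proof.
move=> us a0; rewrite (lower hp0 hp1 hd hc us a0) Ub_map //.
by rewrite (powRK' hp0) //; apply: sumr_ge0 => x _; exact: powR_ge0.
Qed.

Lemma Fp_ge0 s : 0 <= Fp_norm p d o s.
Proof.
rewrite FpE; have [ne|e] := pselect (FpS p d o s !=set0).
  have [r hr] := ne; apply: le_trans (_ : 0 <= r) _.
    by case: hr => Y [f [_ _ ->]]; exact: pb_norm_ge0.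
  apply: sup_upper_bound => //; split => //; exists (Ub p d o s).
  exact: (FpS_ub hp0 hd).
have -> : FpS p d o s = set0.
  by apply/seteqP; split => // r hr; exfalso; apply: e; exists r.
by rewrite sup0.
Qed.

Lemma c_of_dist : (forall x : M, x != o -> d x o = dist_set d x (~` [set x])) ->
  forall x z, x != o -> z != x -> d x o <= d x z.
Proof.
move=> h x z xo zx; rewrite (h x xo) /dist_set.
apply: ge_inf; last by exists z => //=; apply/eqP.
exists 0 => r [w _ <-]; exact: (d_ge0 hd).
Qed.

Lemma dist_of_c x : x != o -> (forall z, z != x -> d x o <= d x z) ->
  d x o = dist_set d x (~` [set x]).
Proof.
move=> xo h; rewrite /dist_set; apply/le_anti/andP; split.
  apply: lb_le_inf; first by exists (d x o); exists o => //=; apply/eqP; rewrite eq_sym.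
  by move=> r [w /= wx <-]; apply: h; apply/eqP.
apply: ge_inf; last by exists o => //=; apply/eqP; rewrite eq_sym.
exists 0 => r [w _ <-]; exact: (d_ge0 hd).
Qed.


Lemma upper2 x z (alpha : R) : 0 <= alpha ->
  Fp_norm p d o [:: (1, x); (alpha, z)] `^ p <=
    (1 + alpha) `^ p * d z o `^ p + d x z `^ p.
Proof.
move=> al0.
have U0 : 0 <= (1 + alpha) `^ p * d z o `^ p + d x z `^ p.
  by rewrite addr_ge0 ?mulr_ge0 ?powR_ge0.
have h : Fp_norm p d o [:: (1, x); (alpha, z)] <=
    ((1 + alpha) `^ p * d z o `^ p + d x z `^ p) `^ p^-1.
  apply: Fp_le; first exact: powR_ge0.
  move=> Y f [fo fL].
  apply: (le_powRinv' hp0); [exact: pb_norm_ge0 | exact: U0 |].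
  rewrite !big_cons big_nil /= scale1r addr0.
  have -> : f x + alpha *: f z = (1 + alpha) *: f z + (f x - f z).
    by rewrite scalerDl scale1r addrAC addrCA subrr addr0.
  apply: le_trans (pb_normD _ _) _; apply: lerD.
    rewrite pb_normZ ger0_norm; last by rewrite addr_ge0 // ler01.
    rewrite powRM; [|by rewrite addr_ge0 // ler01|exact: pb_norm_ge0].
    apply: ler_wpM2l; first exact: powR_ge0.
    apply: ge0_ler_powR; first exact: ltW.
    - by rewrite nnegrE pb_norm_ge0.
    - by rewrite nnegrE (d_ge0 hd).
    by have := fL z o; rewrite fo subr0.
  apply: ge0_ler_powR; first exact: ltW.
  - by rewrite nnegrE pb_norm_ge0.
  - by rewrite nnegrE (d_ge0 hd).
  exact: fL.
have := ge0_ler_powR (ltW hp0) (Fp_ge0 _) _ h.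
rewrite (powRK' hp0 U0); apply.
by rewrite nnegrE powR_ge0.
Qed.

Lemma BtoC : (forall (alpha : R) (x y : M), 0 <= alpha -> x != o -> y != o -> x != y ->
       Fp_norm p d o [:: (1, x); (alpha, y)] `^ p = d x o `^ p + alpha `^ p * d y o `^ p) ->
  forall x : M, x != o -> d x o = dist_set d x (~` [set x]).
Proof.
move=> hB x xo; apply: dist_of_c => // z zx.
have [->|zo] := eqVneq z o; first exact: lexx.
rewrite leNgt; apply/negP => hlt.
set dl := d x o `^ p - d x z `^ p.
have dl0 : 0 < dl.
  rewrite subr_gt0; apply: (gt0_ltr_powR hp0); [rewrite nnegrE; exact: (d_ge0 hd) | rewrite nnegrE; exact: (d_ge0 hd) | exact: hlt].
set Dz := d z o `^ p.
have Dz0 : 0 < Dz.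
  apply: powR_gt0; rewrite lt_neqAle (d_ge0 hd) andbT eq_sym.
  by apply/negP => /eqP /(d_eq0 hd) /eqP; rewrite (negbTE zo).
have p1 : p - 1 != 0 by rewrite subr_eq0 lt_eqF.
set K := ln (dl / Dz) / (p - 1) + 1.
set al := expR K.
have al0 : 0 < al := expR_gt0 K.
have xz : x != z by rewrite eq_sym.
have := hB al x z (ltW al0) xo zo xz.
move=> eq1; have := upper2 x z (ltW al0); rewrite eq1 => h2.
have h3 : (1 + al) `^ p <= al `^ p * (1 + al^-1).
  have -> : 1 + al = al * (1 + al^-1) by rewrite mulrDr mulr1 mulfV ?gt_eqF // addrC.
  rewrite powRM; [|exact: ltW|by rewrite addr_ge0 ?invr_ge0 ?ltW // ler01].
  apply: ler_wpM2l; first exact: powR_ge0.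
  apply: ler1_powR; last exact: ltW.
  by rewrite lerDl invr_ge0 ltW.
have h4 : al `^ p * al^-1 = expR ((p - 1) * K).
  rewrite /al /powR gt_eqF ?expR_gt0 // expRK -expRN -expRD.
  congr expR; lra.
have h5 : expR ((p - 1) * K) = dl / Dz * expR (p - 1).
  rewrite /K mulrDr mulr1 mulrCA mulfV // mulr1 (expRD (ln _)) lnK //.
  exact: (divr_gt0 dl0 Dz0).
have h6 : expR (p - 1) < 1 by rewrite expR_lt1 subr_lt0.
have h7 : dl <= al `^ p * al^-1 * Dz.
  have : dl <= ((1 + al) `^ p - al `^ p) * Dz.
    rewrite /dl mulrBl; move: h2; rewrite /Dz; lra.
  move=> h; apply: le_trans h _; apply: ler_wpM2r; first exact: ltW.
  rewrite mulrDr mulr1 in h3; lra.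
move: h7; rewrite h4 h5 -mulrA [expR _ * _]mulrC mulrA mulfVK ?gt_eqF //.
rewrite -[X in X <= _ -> _]mulr1 => h8.
have : dl * expR (p - 1) < dl * 1 by rewrite ltr_pM2l.
by rewrite ltNge h8.
Qed.


Lemma esum_single x (c : R) : 0 <= c ->
  \esum_(z in [set: M]) ((if z == x then c else 0)%:E) = c%:E.
Proof.
move=> c0.
rewrite (@eq_esum _ _ _ _ (fun z => if z \in [set x] then c%:E else 0%E)); last first.
  by move=> z _; rewrite in_set1; case: eqP.
by rewrite -esum_mkcond esum_set1 // lee_fin.
Qed.

Lemma AtoB :
    (forall a : M -> R, (forall x, 0 <= a x) ->
       (\esum_(x in [set: M]) ((a x * d x o) `^ p)%:E < +oo)%E ->
       finset_net_cvg
         (fun B : set M => Fp_norm p d o [seq (a x, x) | x <- fset_set B] `^ p)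
         (fine (\esum_(x in [set: M]) ((a x * d x o) `^ p)%:E))) ->
    (forall (alpha : R) (x y : M), 0 <= alpha -> x != o -> y != o -> x != y ->
       Fp_norm p d o [:: (1, x); (alpha, y)] `^ p
         = d x o `^ p + alpha `^ p * d y o `^ p).
Proof.
move=> hA alpha x y al0 xo yo nxy.
pose a := fun z => if z == x then 1 else if z == y then alpha else 0.
have a0 z : 0 <= a z.
  by rewrite /a; case: ifP => _; [exact: ler01|case: ifP => _; [exact: al0|exact: lexx]].
have hr z : ((a z * d z o) `^ p)%:E = ((if z == x then d x o `^ p else 0)%:E
    + (if z == y then alpha `^ p * d y o `^ p else 0)%:E)%E.
  rewrite /a; have [->|zx] := eqVneq z x.
    by rewrite (negbTE nxy) mul1r addr0.
  have [->|zy] := eqVneq z y.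
    by rewrite add0r powRM // (d_ge0 hd).
  by rewrite mul0r powR0 ?gt_eqF // add0r.
have hE : \esum_(z in [set: M]) ((a z * d z o) `^ p)%:E
    = (d x o `^ p + alpha `^ p * d y o `^ p)%:E.
  rewrite (eq_esum (fun z _ => hr z)) esumD; last 2 first.
  - by move=> z _; rewrite lee_fin; case: ifP => _; [exact: powR_ge0|exact: lexx].
  - by move=> z _; rewrite lee_fin; case: ifP => _; [rewrite mulr_ge0 // powR_ge0|exact: lexx].
  rewrite esum_single; last exact: powR_ge0.
  rewrite esum_single; last by rewrite mulr_ge0 // powR_ge0.
  by rewrite EFinD.
have hfin : (\esum_(z in [set: M]) ((a z * d z o) `^ p)%:E < +oo)%E.
  by rewrite hE ltry.
have hnet := hA a a0 hfin; rewrite hE /= in hnet.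
set L := d x o `^ p + alpha `^ p * d y o `^ p in hnet *.
set V := Fp_norm p d o [:: (1, x); (alpha, y)] `^ p.
have hV B : finite_set B -> B x -> B y ->
    Fp_norm p d o [seq (a z, z) | z <- fset_set B] `^ p = V.
  move=> fB Bx By; rewrite /V; congr (_ `^ _); apply: Fp_eq => W f.
  rewrite big_map !big_cons big_nil /= scale1r addr0.
  rewrite (eq_bigr (fun z => (if z == x then f x else 0) + (if z == y then alpha *: f y else 0))).
    rewrite big_split /= !sum_pred1 //; try exact: fset_uniq.
      by rewrite in_fset_set // inE.
    by rewrite in_fset_set // inE.
  move=> z _; rewrite /a; have [->|zx] := eqVneq z x.
    by rewrite (negbTE nxy) scale1r addr0.
  have [->|zy] := eqVneq z y; first by rewrite add0r.
  by rewrite scale0r addr0.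
have [//|ne] := eqVneq V L.
exfalso.
have e0 : 0 < `|V - L| by rewrite normr_gt0 subr_eq0.
have [A [fA hA']] := hnet _ e0.
have fB : finite_set (A `|` ([set x] `|` [set y])).
  by rewrite !finite_setU; split => //; split; exact: finite_set1.
have := hA' _ fB (@subsetUl _ _ _).
rewrite hV //; [by rewrite ltxx | by right; left | by right; right].
Qed.


Lemma CtoA : (forall x : M, x != o -> d x o = dist_set d x (~` [set x])) ->
    (forall a : M -> R, (forall x, 0 <= a x) ->
       (\esum_(x in [set: M]) ((a x * d x o) `^ p)%:E < +oo)%E ->
       finset_net_cvg
         (fun B : set M => Fp_norm p d o [seq (a x, x) | x <- fset_set B] `^ p)
         (fine (\esum_(x in [set: M]) ((a x * d x o) `^ p)%:E))).
Proof.
move=> hC a a0 hfin.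
have hc := c_of_dist hC.
set E := \esum_(x in [set: M]) ((a x * d x o) `^ p)%:E in hfin *.
have E0 : (0 <= E)%E by apply: esum_ge0 => x _; rewrite lee_fin powR_ge0.
have Efin : E \is a fin_num by rewrite ge0_fin_numE.
set L := fine E.
have EL : E = L%:E by rewrite fineK.
pose r x := (a x * d x o) `^ p.
have hS B : finite_set B -> (\sum_(x \in B) (r x)%:E)%E = (\sum_(x <- fset_set B) r x)%:E.
  by move=> fB; rewrite fsbig_finite // sumEFin.
have hg B : finite_set B ->
    Fp_norm p d o [seq (a x, x) | x <- fset_set B] `^ p = \sum_(x <- fset_set B) r x.
  by move=> fB; exact: (Fp_pow hc (fset_uniq _) a0).
have hup B : finite_set B -> \sum_(x <- fset_set B) r x <= L.
  move=> fB; rewrite -lee_fin -EL -hS //; apply: ereal_sup_ubound.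
  by exists B.
move=> e e0.
have : ((L - e)%:E < E)%E by rewrite EL lte_fin; lra.
rewrite {1}/E /esum => /ereal_sup_gt [_ [A [fA _] <-]] hA.
rewrite (hS A fA) lte_fin in hA.
exists A; split => // B fB AB.
rewrite hg //.
have hAB : \sum_(x <- fset_set A) r x <= \sum_(x <- fset_set B) r x.
  rewrite -lee_fin -(hS A fA) -(hS B fB); apply: lee_fsum_nneg_subset => //.
    exact/subsetP.
  by move=> x _; rewrite lee_fin powR_ge0.
have := hup B fB.
move=> h1; rewrite ltr_norml; apply/andP; split; lra.
Qed.

End Main.

Unset Implicit Arguments. Set Strict Implicit.

Theorem theorem2p8 (R : realType) (p : R) (M : choiceType) (d : M -> M -> R) (o : M) :
  0 < p < 1 -> is_pmetric p d ->
  (exists x y z : M, [/\ x != y, y != z & x != z]) ->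
  [<->
    (* (a) *)
    (forall a : M -> R, (forall x, 0 <= a x) ->
       (\esum_(x in [set: M]) ((a x * d x o) `^ p)%:E < +oo)%E ->
       finset_net_cvg
         (fun B : set M => Fp_norm p d o [seq (a x, x) | x <- fset_set B] `^ p)
         (fine (\esum_(x in [set: M]) ((a x * d x o) `^ p)%:E)));
    (* (b) *)
    (forall (alpha : R) (x y : M), 0 <= alpha -> x != o -> y != o -> x != y ->
       Fp_norm p d o [:: (1, x); (alpha, y)] `^ p
         = d x o `^ p + alpha `^ p * d y o `^ p);
    (* (c) *)
    (forall x : M, x != o -> d x o = dist_set d x (~` [set x]))].
Proof.
move=> /andP[hp0 hp1] hd _.
tfae.
- move=> h; exact: (@AtoB _ _ hp0 _ _ _ hd h).
- move=> h; exact: (@BtoC _ _ hp0 hp1 _ _ _ hd h).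
- move=> h; exact: (@CtoA _ _ hp0 hp1 _ _ _ hd h).
Qed.
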